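(* For every $\varepsilon,\delta\in(0,1)$ there exists an orchestration problem $P_{\varepsilon,\delta}$ (with at least two agents of different long-running correctness) such that, if $A_{\mathrm{rand}}$ denotes an agent of $P_{\varepsilon,\delta}$ chosen uniformly at random, then with probability at least $1-\delta$, $$\frac{\mathsf{C}_{\max}}{\mathsf{C}(A_{\mathrm{rand}})}\;\geq\;\min_{k,h\colon \mathsf{C}(A_k)\neq \mathsf{C}(A_h)} d(A_k,A_h)\;\geq\;\frac{1}{1-\varepsilon}.$$ In particular, these problems satisfy, for each fixed $\varepsilon\in(0,1)$, $$\lim_{\delta\to 0}\frac{\mathsf{C}_{\max}}{\mathsf{C}_{\mathrm{rand}}}\;\geq\;\frac{1}{1-\varepsilon},$$ where $\mathsf{C}_{\max}$ and $\mathsf{C}_{\mathrm{rand}}$ are computed for $P_{\varepsilon,\delta}$.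
   Context: An orchestration problem consists of finitely many mutually exclusive regions $\mathcal{R}_1,\dots,\mathcal{R}_M$ partitioning the input distribution, with region probabilities $\mathbb{P}(\mathcal{R}_m)\ge 0$ summing to $1$, and a finite set of agents $A_1,\dots,A_K$, each with a probability of correctness $\mathbb{P}(A_k\mid\mathcal{R}_m)\in(0,1]$ in each region (all assumed non-zero). The long-running correctness of agent $A_k$ is $\mathsf{C}(A_k)=\sum_{m=1}^M \mathbb{P}(\mathcal{R}_m)\,\mathbb{P}(A_k\mid\mathcal{R}_m)$. The theoretical maximum correctness is $\mathsf{C}_{\max}=\sum_{m=1}^M \mathbb{P}(\mathcal{R}_m)\max_k \mathbb{P}(A_k\mid\mathcal{R}_m)$ (achieved by picking, in each region, the most correct agent). If $A_{\mathrm{rand}}$ is an agent chosen uniformly at random from $\{A_1,\dots,A_K\}$, then $\mathsf{C}(A_{\mathrm{rand}})$ is a random variable and $\mathsf{C}_{\mathrm{rand}}=\mathbb{E}[\mathsf{C}(A_{\mathrm{rand}})]$. The dissimilarity of two agents is $d(A_k,A_h)=\max_m \exp\left|\log\frac{\mathbb{P}(A_k\mid\mathcal{R}_m)}{\mathbb{P}(A_h\mid\mathcal{R}_m)}\right|$. *)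

(* Defs.v *)
From HB Require Import structures.
From mathcomp Require Import all_boot all_order all_algebra.
From mathcomp Require Import reals sequences exp.
Set Implicit Arguments. Unset Strict Implicit. Unset Printing Implicit Defensive.
Import Order.TTheory GRing.Theory Num.Theory.
Local Open Scope ring_scope.

(* An orchestration problem: M mutually exclusive regions with probabilities
   pR (nonnegative, summing to 1) and K agents with correctness probabilities
   pA k m in (0,1]. *)
Record orch (R : realType) := Orch {
  nM : nat;
  nK : nat;
  pR : 'I_nM -> R;
  pA : 'I_nK -> 'I_nM -> R;
  pR_ge0 : forall m, 0 <= pR m;
  pR_sum1 : \sum_(m < nM) pR m = 1;
  pA_pos : forall k m, 0 < pA k m;
  pA_le1 : forall k m, pA k m <= 1
}.
Arguments nM {R} _.
Arguments nK {R} _.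
Arguments pR {R} _ _.
Arguments pA {R} _ _ _.

Section Defs.
Variable R : realType.
Variable P : orch R.

Definition Corr (k : 'I_(nK P)) : R := \sum_(m < nM P) pR P m * pA P k m.

(* C_max = sum_m P(R_m) max_k P(A_k | R_m)  (values are > 0, so 0 is a
   neutral start for the max when K >= 1) *)
Definition Cmax : R :=
  \sum_(m < nM P) pR P m * \big[Num.max/0]_(k < nK P) pA P k m.

Definition Crand : R := (\sum_(k < nK P) Corr k) / (nK P)%:R.

Definition prob_rand (E : pred 'I_(nK P)) : R :=
  #|[set k | E k]|%:R / (nK P)%:R.

Definition dissim (k h : 'I_(nK P)) : R :=
  \big[Num.max/0]_(m < nM P) expR `|ln (pA P k m / pA P h m)|.

Definition dissim_list : seq R :=
  [seq dissim kh.1 kh.2 | kh <- enum [pred kh : 'I_(nK P) * 'I_(nK P) |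
                                       Corr kh.1 != Corr kh.2]].

(* min_{k,h : C(A_k) <> C(A_h)} d(A_k,A_h); it is the true minimum whenever
   the list is nonempty (the start value is one of its elements). *)
Definition min_dissim : R :=
  \big[Num.min/head 0 dissim_list]_(x <- dissim_list) x.

End Defs.
Arguments Corr {R} P k.
Arguments Cmax {R} P.
Arguments Crand {R} P.
Arguments prob_rand {R} P E.
Arguments dissim {R} P k h.
Arguments dissim_list {R} P.
Arguments min_dissim {R} P.

(* Main.v *)
Require Import Defs.
From HB Require Import structures.
From mathcomp Require Import all_boot all_order all_algebra.
From mathcomp Require Import reals sequences exp.
From mathcomp Require Import ring lra.
Import Order.TTheory GRing.Theory Num.Theory.
Local Open Scope ring_scope.

Section S.
Variable R : realType.

Lemma expR_abs_ln (x : R) : 0 < x -> expR `|ln x| = Num.max x x^-1.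
Proof.
move=> x0; case: (lerP 1 x) => hx.
- rewrite ger0_norm; last first.
    by case: (eqVneq x 1) => [->|ne]; [rewrite ln1|apply/ltW/ln_gt0; rewrite lt_neqAle eq_sym ne].
  rewrite lnK ?posrE //; apply/esym/max_idPl.
  by apply: (le_trans _ hx); rewrite invf_le1.
- rewrite ltr0_norm; last by apply: ln_lt0; rewrite x0 hx.
  rewrite -lnV ?posrE // lnK ?posrE ?invr_gt0 //; apply/esym/max_idPr.
  by apply: (le_trans (ltW hx)); rewrite invf_ge1 // ltW.
Qed.
End S.
Section S2.
Variable R : realType.

Definition aa (c : R) (N : nat) (k : 'I_N.+1) : R := if k == ord0 then 1 else c.

Definition cl (c : R) : R := if (0 < c) && (c < 1) then c else 2^-1.
Lemma cl_pos c : 0 < cl c.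
Proof. by rewrite /cl; case: ifP => [/andP[]|]//; rewrite invr_gt0. Qed.
Lemma cl_lt1 c : cl c < 1.
Proof. by rewrite /cl; case: ifP => [/andP[]|]//; rewrite invf_lt1 // ltr1n. Qed.

Lemma aa_pos c N k (m : 'I_1) : 0 < aa (cl c) N k.
Proof. by rewrite /aa; case: ifP => // _; apply: cl_pos. Qed.
Lemma aa_le1 c N k (m : 'I_1) : aa (cl c) N k <= 1.
Proof. by rewrite /aa; case: ifP => // _; apply/ltW/cl_lt1. Qed.
Lemma pR1 : \sum_(m < 1) (fun _ => 1 : R) m = 1.
Proof. by rewrite big_ord1. Qed.

Definition mkP (c : R) (N : nat) : orch R :=
  @Orch R 1 N.+1 (fun _ => 1) (fun k _ => aa (cl c) N k)
    (fun _ => @ler01 R) pR1 (@aa_pos c N) (@aa_le1 c N).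

Variables (c : R) (N : nat).
Let P := mkP c N.
Let d := cl c.

Lemma CorrE k : Corr P k = aa d N k.
Proof. by rewrite /Corr big_ord1 mul1r. Qed.

Lemma CmaxE : Cmax P = 1.
Proof.
rewrite /Cmax big_ord1 mul1r /= big_ord_recl /aa eqxx.
apply/max_idPl; elim/big_ind: _ => //.
- by move=> x y hx hy; rewrite ge_max hx hy.
- by move=> i _; apply/ltW/cl_lt1.
Qed.

Lemma dissimE k h : aa d N k != aa d N h -> dissim P k h = d^-1.
Proof.
have d0 := cl_pos c; have d1 := cl_lt1 c.
have dd : d <= d^-1 by apply: (le_trans (ltW d1)); rewrite invf_ge1 // ltW.
have hk := aa_pos c N k ord0; have hh := aa_pos c N h ord0.
rewrite /dissim /= big_ord_recl big_ord0 /= expR_abs_ln ?divr_gt0 //.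
move=> hne; have hmax : Num.max (aa d N k / aa d N h) (aa d N k / aa d N h)^-1 = d^-1.
  move: hne; rewrite /aa; case: ifP => _; case: ifP => _; rewrite ?eqxx //= => _.
  - by rewrite div1r invrK; apply/max_idPl.
  - by rewrite divr1; apply/max_idPr.
rewrite hmax; apply/max_idPl; rewrite invr_ge0 ltW //.
Qed.

Lemma min_dissimE : (0 < N)%N -> min_dissim P = d^-1.
Proof.
move=> N0.
have hall : forall x, x \in dissim_list P -> x = d^-1.
  move=> x /mapP [[k h] /=]; rewrite mem_enum inE /= !CorrE => hk ->.
  exact: dissimE.
have ne : dissim_list P != [::].
  have hin : (ord0, (Ordinal (N0 : (1 < N.+1)%N)) : 'I_N.+1) \in
     enum [pred kh : 'I_(nK P) * 'I_(nK P) | Corr P kh.1 != Corr P kh.2].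
    rewrite mem_enum inE /= !CorrE /aa eqxx /=.
    by rewrite eq_sym lt_eqF // (cl_lt1 c).
  by apply/eqP => e; move: (map_f (fun kh => dissim P kh.1 kh.2) hin); rewrite -/(dissim_list P) e.
rewrite /min_dissim.
have hh : head 0 (dissim_list P) = d^-1.
  by case: (dissim_list P) hall ne => //= x s h _; apply: h; rewrite mem_head.
rewrite hh big_seq; elim/big_ind: _ => //.
  by move=> x y -> ->; rewrite minxx.
Qed.

Lemma CrandE : Crand P = (1 + d *+ N) / (N.+1)%:R.
Proof.
rewrite /Crand big_ord_recl CorrE /aa eqxx; congr (_ / _); congr (_ + _).
rewrite (eq_bigr (fun _ => d)) ?sumr_const ?card_ord //.
by move=> i _; rewrite CorrE /aa.
Qed.
End S2.
Arguments mkP {R} c N. Arguments cl {R} c. Arguments aa {R} c N k.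
Arguments CorrE {R} c N k. Arguments CmaxE {R} c N. Arguments min_dissimE {R} c N _. Arguments CrandE {R} c N.

Theorem theorem1 (R : realType) :
  exists Pfam : R -> R -> orch R,
    (forall eps delta : R, 0 < eps < 1 -> 0 < delta < 1 ->
       let P := Pfam eps delta in
       (exists k h : 'I_(nK P), Corr P k != Corr P h) /\
       1 - delta <= prob_rand P
         (fun k => (min_dissim P <= Cmax P / Corr P k) &&
                   ((1 - eps)^-1 <= min_dissim P)))
    /\
    (forall eps : R, 0 < eps < 1 ->
       (* liminf_{delta -> 0+} C_max / C_rand >= 1/(1-eps) *)
       forall eta : R, 0 < eta ->
       exists delta0 : R, 0 < delta0 /\
         forall delta : R, 0 < delta -> delta < delta0 -> delta < 1 ->
           (1 - eps)^-1 - eta <= Cmax (Pfam eps delta) / Crand (Pfam eps delta)).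
Proof.
pose NN (eps delta : R) := (Num.trunc (delta^-1) + Num.trunc ((1-eps)^-1)).+1.
exists (fun eps delta => mkP ((1-eps)^+2) (NN eps delta)).
have clE (eps : R) : 0 < eps < 1 -> cl ((1-eps)^+2) = (1-eps)^+2.
  move=> /andP[e0 e1]; rewrite /cl ifT //; apply/andP; split; first by rewrite exprn_gt0 // subr_gt0.
  by rewrite expr2; nra.
have NNge eps delta : 0 < eps < 1 -> 0 < delta ->
    delta^-1 < (NN eps delta)%:R /\ (1-eps)^-1 < (NN eps delta)%:R.
  move=> /andP[e0 e1] d0; have h1 := truncnS_gt (delta^-1); have h2 := truncnS_gt ((1-eps)^-1).
  split.
    apply: (lt_le_trans h1); rewrite ler_nat /NN ltnS leq_addr //.
  apply: (lt_le_trans h2); rewrite ler_nat /NN ltnS leq_addl //.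
split.
- move=> eps delta he /andP[d0 d1] P.
  have [hN1 hN2] := NNge eps delta he d0.
  move: (he) => /andP[e0 e1].
  have hd := clE eps he.
  set N := NN eps delta.
  have N0 : (0 < N)%N by [].
  split.
    exists ord0, (Ordinal (N0 : (1 < N.+1)%N)).
    rewrite !CorrE /aa /= hd; rewrite eq_sym; apply/eqP => /eqP; rewrite expr2; nra.
  rewrite /prob_rand /=.
  have sub : [set~ (ord0 : 'I_N.+1)] \subset [set k | (min_dissim P <= Cmax P / Corr P k) &&
                   ((1 - eps)^-1 <= min_dissim P)].
    apply/subsetP => k; rewrite !inE => kn0.
    rewrite min_dissimE // CmaxE CorrE /aa (negbTE kn0) div1r lexx /= hd.
    rewrite lef_pV2 ?posrE ?subr_gt0 ?exprn_gt0 ?subr_gt0 //.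
    rewrite expr2; nra.
  have := subset_leq_card sub; rewrite cardsC1 card_ord /= => hc.
  have hc' : N%:R <= #|[set k | (min_dissim P <= Cmax P / Corr P k) &&
                   ((1 - eps)^-1 <= min_dissim P)]|%:R :> R by rewrite ler_nat.
  have key : 1 - delta <= N%:R / (N.+1)%:R.
    rewrite ler_pdivlMr ?ltr0Sn // -natr1.
    have hdd : delta * delta^-1 = 1 by rewrite mulfV // gt_eqF.
    nra.
  apply: (le_trans key); apply: ler_wpM2r => //; by rewrite invr_ge0 ler0n.
- move=> eps he eta eta0; exists 1; split => // delta d0 _ _.
  have [_ hN2] := NNge eps delta he d0; have hd := clE eps he; move: he => /andP[e0 e1].
  rewrite CmaxE CrandE hd.
  apply: (le_trans (_ : _ <= (1-eps)^-1)); first by lra.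
  rewrite -mulr_natr -natr1 div1r invf_div.
  set n := (NN eps delta)%:R in hN2 *.
  have n0 : 0 <= n by rewrite ler0n.
  set e := 1 - eps in hN2 *.
  have ee : 0 < e < 1 by rewrite /e; apply/andP; split; lra.
  move: ee => /andP[ep e1'].
  have hee : e * e^-1 = 1 by rewrite mulfV // gt_eqF.
  have pos : 0 < 1 + e ^+ 2 * n by rewrite expr2; nra.
  rewrite -mulr_natr -/n ler_pdivlMr //.
  rewrite mul1r.
  have -> : e^-1 * (1 + e ^+ 2 * n) = e^-1 + e * n.
    rewrite mulrDr mulr1 expr2 !mulrA (mulrC e^-1) hee mul1r //.
  nra.
Qed.
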